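(* For all $k\ge1$, as formal power series in $t$, $$\sum_{n\ge k}\mathbf{Sf}_{n,k}(p,q)\,t^n=\frac{t^k}{(1-F_1(p,q)t)(1-F_2(p,q)t)\cdots(1-F_k(p,q)t)}.$$
   Context: $F_1(p,q)=q$, $F_2(p,q)=q^2$ and $F_m(p,q)=qF_{m-1}(p,q)+pF_{m-2}(p,q)$ for $m\ge3$. Let $(x)_{\downarrow_{F,p,q,0}}=1$ and $(x)_{\downarrow_{F,p,q,k}}=x(x-F_1(p,q))\cdots(x-F_{k-1}(p,q))$ for $k\ge1$. Define $\mathbf{Sf}_{n,k}(p,q)$ for $0\le k\le n$ by $x^n=\sum_{k=0}^n\mathbf{Sf}_{n,k}(p,q)(x)_{\downarrow_{F,p,q,k}}$. *)

(* Defs.v *)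
From HB Require Import structures.
From mathcomp Require Import all_boot all_order all_algebra.
Set Implicit Arguments. Unset Strict Implicit. Unset Printing Implicit Defensive.
Import GRing.Theory.
Local Open Scope ring_scope.

Fixpoint Fpq (R : comNzRingType) (p q : R) (m : nat) : R :=
  match m with
  | 0 => 0
  | 1 => q
  | 2 => q ^+ 2
  | (m'.+1 as m1).+1 => q * Fpq p q m1 + p * Fpq p q m'
  end.

Definition ffall (R : comNzRingType) (p q : R) (k : nat) : {poly R} :=
  if k is 0 then 1 else 'X * \prod_(1 <= i < k) ('X - (Fpq p q i)%:P).

Definition fps (R : comNzRingType) := nat -> R.
Definition fps_mul (R : comNzRingType) (f g : fps R) : fps R :=
  fun n => \sum_(i < n.+1) f i * g (n - i)%N.
Definition fps_of_poly (R : comNzRingType) (P : {poly R}) : fps R := fun n => P`_n.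
Definition fps_tpow (R : comNzRingType) (k : nat) : fps R := fun n => (n == k)%:R.

(* Main.v *)
Require Import Defs.
From HB Require Import structures.
From mathcomp Require Import all_boot all_order all_algebra.
From mathcomp Require Import ring.
From Stdlib Require Import FunctionalExtensionality.
Import GRing.Theory.
Local Open Scope ring_scope.

Section S.
Variables (R : comNzRingType) (p q : R).

Lemma ffall_monic k : ffall p q k \is monic /\ size (ffall p q k) = k.+1.
Proof.
case: k => [|k]; first by rewrite /= monic1 size_poly1.
rewrite /= monicMl ?monicX // monic_prod_XsubC; split => //.
rewrite mulrC size_mulX ?monic_neq0 ?monic_prod_XsubC //.
by rewrite size_prod_XsubC /index_iota subn1 size_iota.
Qed.

Lemma ffall_coef k i : (ffall p q k)`_i = if (i == k)%N then 1 else if (k < i)%N then 0 else (ffall p q k)`_i.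
Proof.
have [M S] := ffall_monic k.
case: eqP => [->|_].
  by move/monicP: M; rewrite /lead_coef S.
case: ifP => // lt; rewrite nth_default // S //.
Qed.

Lemma Xffall k : 'X * ffall p q k = ffall p q k.+1 + (Fpq p q k)%:P * ffall p q k.
Proof.
case: k => [|k]; first by rewrite /= big_geq // mulr1 mul0r addr0.
have -> : ffall p q k.+2 = ffall p q k.+1 * ('X - (Fpq p q k.+1)%:P).
  by rewrite /ffall big_nat_recr //= mulrA.
ring.
Qed.

Lemma sum_ffall0 N (c : nat -> R) :
  \sum_(k < N) (c k)%:P * ffall p q k = 0 -> forall k, (k < N)%N -> c k = 0.
Proof.
elim: N => [|N IH] // H k.
have cN : c N = 0.
  move/(congr1 (fun P : {poly R} => P`_N)): H.
  rewrite big_ord_recr /= coef0 coefD coef_sum coefCM ffall_coef eqxx mulr1.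
  rewrite big1 ?add0r // => i _.
  by rewrite coefCM ffall_coef (gtn_eqF (ltn_ord i)) ltn_ord mulr0.
rewrite ltnS leq_eqVlt => /orP [/eqP -> //|lt].
apply: IH lt.
by move: H; rewrite big_ord_recr /= cN mul0r addr0.
Qed.

Lemma sum_ffall_uniq N (c d : nat -> R) :
  \sum_(k < N) (c k)%:P * ffall p q k = \sum_(k < N) (d k)%:P * ffall p q k ->
  forall k, (k < N)%N -> c k = d k.
Proof.
move=> H k lt; apply/eqP; rewrite -subr_eq0; apply/eqP.
apply: (@sum_ffall0 N (fun k => c k - d k)) lt.
rewrite (eq_bigr (fun k : 'I_N => (c k)%:P * ffall p q k - (d k)%:P * ffall p q k)).
  by rewrite sumrB H subrr.
by move=> i _; rewrite polyCB mulrBl.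
Qed.


Variable Sf : nat -> nat -> R.
Hypothesis HS : forall n : nat, 'X^n = \sum_(k < n.+1) (Sf n k)%:P * ffall p q k.

Definition g k n := if (k <= n)%N then Sf n k else 0.

Lemma g_big k n : (n < k)%N -> g k n = 0.
Proof. by move=> h; rewrite /g leqNgt h. Qed.

Arguments ffall : simpl never.

Lemma HX n : 'X^n = \sum_(k < n.+1) (g k n)%:P * ffall p q k.
Proof. by rewrite HS; apply: eq_bigr => i _; rewrite /g -ltnS ltn_ord. Qed.

Lemma g_rec n k : g k n.+1 = (if k is k'.+1 then g k' n else 0) + Fpq p q k * g k n.
Proof.
case: (ltnP k n.+2) => lt; last first.
  rewrite !g_big ?mulr0 ?addr0 //; last by apply: leq_trans lt.
  by case: k lt => // k lt; rewrite g_big.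
pose d k := (if k is k'.+1 then g k' n else 0) + Fpq p q k * g k n.
apply: (@sum_ffall_uniq n.+2 (fun k => g k n.+1) d) lt.
rewrite -HX exprS HX mulr_sumr.
rewrite (eq_bigr (fun k : 'I_n.+2 => (if k : nat is k'.+1 then g k' n else 0)%:P * ffall p q k
   + (Fpq p q k * g k n)%:P * ffall p q k)); last by move=> i _; rewrite polyCD mulrDl.
rewrite big_split [X in _ = X + _]big_ord_recl [X in _ = _ + X]big_ord_recr /=.
rewrite (@g_big n.+1 n (ltnSn n)) mulr0 polyC0 !mul0r addr0 add0r.
rewrite -big_split.
apply: eq_bigr => i _ /=; rewrite mulrCA Xffall mulrDr; congr (_ + _).
by rewrite polyCM mulrA [_%:P * _%:P]mulrC.
Qed.

Lemma g0 n : g 0 n = (n == 0)%:R.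
Proof.
elim: n => [|n IH].
  move/(congr1 (fun P : {poly R} => P`_0)): (HX 0).
  by rewrite big_ord1 /ffall /= mulr1 expr0 coef1 coefC /=.
by rewrite (g_rec n 0) IH /= mul0r add0r.
Qed.

Definition A k N : {poly R} := \poly_(i < N) g k i.
Definition P k : {poly R} := \prod_(1 <= i < k.+1) (1 - (Fpq p q i)%:P * 'X).

Lemma A_rec k N : A k.+1 N.+1 = 'X * (A k N + (Fpq p q k.+1)%:P * A k.+1 N).
Proof.
apply/polyP => j; rewrite coefXM coef_poly.
case: j => [|j] /=; first by rewrite g_big.
by rewrite coefD coefCM !coef_poly ltnS g_rec; case: ifP => //; rewrite mulr0 addr0.
Qed.

Lemma A_split k N : A k N.+1 = A k N + (g k N)%:P * 'X^N.
Proof.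
apply/polyP => j; rewrite coefD coefCM coefXn !coef_poly ltnS leq_eqVlt.
case: eqP => [->|ne]; first by rewrite ltnn add0r mulr1.
by rewrite mulr0 addr0 /=.
Qed.

Lemma main k N n : (n < N)%N -> (A k N * P k)`_n = (n == k)%:R.
Proof.
elim: k N n => [|k IH] N n lt.
  by rewrite /P big_geq // mulr1 coef_poly lt g0.
case: N lt => // N lt.
set c := Fpq p q k.+1.
have EP : P k.+1 = P k * (1 - c%:P * 'X) by rewrite /P big_nat_recr.
have E : A k.+1 N.+1 * (1 - c%:P * 'X) = 'X * A k N - (c * g k.+1 N)%:P * 'X^(N.+1).
  have -> : A k.+1 N.+1 * (1 - c%:P * 'X) = A k.+1 N.+1 - c%:P * 'X * A k.+1 N.+1 by ring.
  rewrite {1}A_rec A_split polyCM exprS; ring.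
rewrite EP mulrCA mulrC.
rewrite E mulrBl coefB -!mulrA coefCM coefXnM lt mulr0 subr0.
rewrite coefXM; case: n lt => [|n] lt //=.
by rewrite IH.
Qed.

End S.

Theorem theorem10 (R : comNzRingType) (p q : R) (Sf : nat -> nat -> R) :
  (forall n : nat, 'X^n = \sum_(k < n.+1) (Sf n k)%:P * ffall p q k) ->
  forall k : nat, (1 <= k)%N ->
    fps_mul (fun n => if (k <= n)%N then Sf n k else 0)
            (fps_of_poly (\prod_(1 <= i < k.+1) (1 - (Fpq p q i)%:P * 'X)))
    = fps_tpow R k.
Proof.
move=> HS k _; apply: functional_extensionality => n.
rewrite /fps_mul /fps_of_poly /fps_tpow -(@main R p q Sf HS k n.+1 n (ltnSn n)) coefM.
by apply: eq_bigr => i _; rewrite coef_poly ltn_ord.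
Qed.
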